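(* Let $\mathcal V$ be a finitely generated variety of cBCK-algebras which is $1$-generated, and let $\mathcal W$ be a cover of $\mathcal V$ in the lattice of varieties of cBCK-algebras. Then $\mathcal W$ is $n$-generated for some $n\le 2$.
   Context: A BCK-algebra is an algebra $(A,\ominus,0)$ of type $(2,0)$ satisfying $((x\ominus y)\ominus(x\ominus z))\ominus(z\ominus y)=0$, $x\ominus 0=x$, $0\ominus x=0$, and ($x\ominus y=0$ and $y\ominus x=0$ imply $x=y$). A cBCK-algebra is a BCK-algebra satisfying $x\ominus(x\ominus y)=y\ominus(y\ominus x)$; cBCK-algebras form a variety. A variety $\mathcal V$ of cBCK-algebras is $n$-generated if there is an $n$-element set of mutually non-isomorphic subdirectly irreducible algebras of $\mathcal V$ generating $\mathcal V$, and there is no set of subdirectly irreducible algebras of smaller cardinality with this property. A cover of a variety $\mathcal V$ is a variety $\mathcal W\supsetneq\mathcal V$ with no variety strictly between them. *)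

(* Defs.v *)
From mathcomp Require Import all_boot.
Set Implicit Arguments. Unset Strict Implicit. Unset Printing Implicit Defensive.

Record cBCK := CBCK {
  car :> Type;
  bsub : car -> car -> car;
  bzero : car;
  bck1 : forall x y z, bsub (bsub (bsub x y) (bsub x z)) (bsub z y) = bzero;
  bck2 : forall x, bsub x bzero = x;
  bck3 : forall x, bsub bzero x = bzero;
  bck4 : forall x y, bsub x y = bzero -> bsub y x = bzero -> x = y;
  cbck : forall x y, bsub x (bsub x y) = bsub y (bsub y x)
}.

Inductive term : Type :=
| TVar : nat -> term
| TZero : term
| TSub : term -> term -> term.

Fixpoint teval (A : cBCK) (v : nat -> A) (t : term) : A :=
  match t with
  | TVar n => v n
  | TZero => bzero A
  | TSub s u => bsub (teval v s) (teval v u)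
  end.

Definition identity := (term * term)%type.

Definition holds (A : cBCK) (e : identity) : Prop :=
  forall v : nat -> A, teval v e.1 = teval v e.2.

(** A class of cBCK-algebras, and varieties = equational classes
    (relative to cBCK-algebras, which form a variety). *)
Definition cls := cBCK -> Prop.

Definition subcls (U V : cls) : Prop := forall A, U A -> V A.

Definition is_variety (V : cls) : Prop :=
  exists E : identity -> Prop, forall A, V A <-> (forall e, E e -> holds A e).

(** V is the variety generated by the family K i (i < n):
    V = Mod(Id(K)) = HSP(K) (Birkhoff). *)
Definition generates (V : cls) (n : nat) (K : 'I_n -> cBCK) : Prop :=
  forall A, V A <-> (forall e, (forall i, holds (K i) e) -> holds A e).

Definition finite_alg (A : cBCK) : Prop :=
  exists l : seq A, forall x : A, exists2 i, i < size l & nth x l i = x.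

Definition finitely_generated (V : cls) : Prop :=
  exists n (K : 'I_n -> cBCK), (forall i, finite_alg (K i)) /\ generates V K.

Definition iso (A B : cBCK) : Prop :=
  exists (f : A -> B) (g : B -> A),
    (forall x, g (f x) = x) /\ (forall y, f (g y) = y) /\
    f (bzero A) = bzero B /\ (forall x y, f (bsub x y) = bsub (f x) (f y)).

(** Congruences and subdirect irreducibility (monolith characterisation:
    A is nontrivial and there is a pair a <> b contained in every
    nontrivial congruence). *)
Definition congruence (A : cBCK) (R : A -> A -> Prop) : Prop :=
  (forall x, R x x) /\ (forall x y, R x y -> R y x) /\
  (forall x y z, R x y -> R y z -> R x z) /\
  (forall x x' y y', R x x' -> R y y' -> R (bsub x y) (bsub x' y')).

Definition subdirectly_irreducible (A : cBCK) : Prop :=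
  exists a b : A, a <> b /\
    forall R, congruence R -> (exists x y, R x y /\ x <> y) -> R a b.

Definition si_generating_family (V : cls) (n : nat) (K : 'I_n -> cBCK) : Prop :=
  (forall i, V (K i) /\ subdirectly_irreducible (K i)) /\
  (forall i j, i <> j -> ~ iso (K i) (K j)) /\
  generates V K.

Definition n_generated (V : cls) (n : nat) : Prop :=
  (exists K : 'I_n -> cBCK, si_generating_family V K) /\
  (forall m (K : 'I_m -> cBCK), m < n -> ~ si_generating_family V K).

Definition variety_cover (V W : cls) : Prop :=
  is_variety W /\ subcls V W /\ ~ subcls W V /\
  forall U, is_variety U -> subcls V U -> subcls U W -> subcls U V \/ subcls W U.

(* Main.v *)
Require Import Defs.
From mathcomp Require Import all_boot.
From mathcomp Require classical_sets.
From Stdlib Require Import Classical ClassicalEpsilon FunctionalExtensionality PropExtensionality ProofIrrelevance.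

Set Implicit Arguments. Unset Strict Implicit. Unset Printing Implicit Defensive.

Lemma bck4_from (T : Type) (s : T -> T -> T) (z : T)
  (h2 : forall x, s x z = x) (hc : forall x y, s x (s x y) = s y (s y x)) x y :
  s x y = z -> s y x = z -> x = y.
Proof.
move=> H1 H2; transitivity (s x (s x y)); first by rewrite H1 h2.
by rewrite hc H2 h2.
Qed.

Definition qcar (A : cBCK) (th : A -> A -> Prop) :=
  {P : A -> Prop | exists x, P = th x}.
Definition qcl (A : cBCK) (th : A -> A -> Prop) (x : A) : qcar th :=
  exist _ (th x) (ex_intro _ x erefl).
Definition qrep (A : cBCK) (th : A -> A -> Prop) (q : qcar th) : A :=
  proj1_sig (constructive_indefinite_description _ (proj2_sig q)).

Lemma qclK (A : cBCK) (th : A -> A -> Prop) (q : qcar th) : qcl th (qrep q) = q.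
Proof.
apply: eq_sig_hprop; first by move=> ? ? ?; apply: proof_irrelevance.
rewrite /qrep /=; case: (constructive_indefinite_description _ _) => x hx /=.
by rewrite hx.
Qed.

Lemma qcl_eq (A : cBCK) (th : A -> A -> Prop) (Hc : congruence th) x y :
  qcl th x = qcl th y <-> th x y.
Proof.
case: Hc => [refl [sym [trans _]]]; split.
  move=> /(f_equal (@proj1_sig _ _)) /= E.
  by apply: sym; rewrite -E; apply: refl.
move=> Hxy; apply: eq_sig_hprop; first by move=> ? ? ?; apply: proof_irrelevance.
rewrite /=; apply: functional_extensionality => z; apply: propositional_extensionality.
split=> H; [exact: trans (sym _ _ Hxy) H | exact: trans Hxy H].
Qed.

Lemma qsurj (A : cBCK) (th : A -> A -> Prop) (q : qcar th) : exists x, q = qcl th x.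
Proof. by exists (qrep q); rewrite qclK. Qed.

Definition qsub (A : cBCK) (th : A -> A -> Prop) (p q : qcar th) : qcar th :=
  qcl th (bsub (qrep p) (qrep q)).

Lemma qsubE (A : cBCK) (th : A -> A -> Prop) (Hc : congruence th) x y :
  qsub (qcl th x) (qcl th y) = qcl th (bsub x y).
Proof.
apply/(qcl_eq Hc); case: (Hc) => _ [_ [_ comp]]; apply: comp;
  by apply/(qcl_eq Hc); rewrite qclK.
Qed.

Lemma q1 (A : cBCK) (th : A -> A -> Prop) (Hc : congruence th) (x y z : qcar th) :
  qsub (qsub (qsub x y) (qsub x z)) (qsub z y) = qcl th (bzero A).
Proof.
case: (qsurj x) => x' ->; case: (qsurj y) => y' ->; case: (qsurj z) => z' ->.
by rewrite !(qsubE Hc) bck1.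
Qed.

Lemma q2 (A : cBCK) (th : A -> A -> Prop) (Hc : congruence th) (x : qcar th) :
  qsub x (qcl th (bzero A)) = x.
Proof. by case: (qsurj x) => x' ->; rewrite !(qsubE Hc) bck2. Qed.

Lemma q3 (A : cBCK) (th : A -> A -> Prop) (Hc : congruence th) (x : qcar th) :
  qsub (qcl th (bzero A)) x = qcl th (bzero A).
Proof. by case: (qsurj x) => x' ->; rewrite !(qsubE Hc) bck3. Qed.

Lemma q5 (A : cBCK) (th : A -> A -> Prop) (Hc : congruence th) (x y : qcar th) :
  qsub x (qsub x y) = qsub y (qsub y x).
Proof.
case: (qsurj x) => x' ->; case: (qsurj y) => y' ->.
by rewrite !(qsubE Hc) cbck.
Qed.

Definition quot (A : cBCK) (th : A -> A -> Prop) (Hc : congruence th) : cBCK :=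
  @CBCK (qcar th) (@qsub A th) (qcl th (bzero A)) (q1 Hc) (q2 Hc) (q3 Hc)
    (bck4_from (q2 Hc) (q5 Hc)) (q5 Hc).

Lemma hom_teval (A B : cBCK) (h : A -> B) :
  h (bzero A) = bzero B -> (forall x y, h (bsub x y) = bsub (h x) (h y)) ->
  forall v t, teval (fun n => h (v n)) t = h (teval v t).
Proof.
move=> h0 hs v; elim=> [n||s IHs u IHu] /=.
- by [].
- by rewrite h0.
- by rewrite IHs IHu hs.
Qed.

Lemma holds_hom (A B : cBCK) (h : A -> B) (g : B -> A) :
  h (bzero A) = bzero B -> (forall x y, h (bsub x y) = bsub (h x) (h y)) ->
  (forall y, h (g y) = y) -> forall e, holds A e -> holds B e.
Proof.
move=> h0 hs hg e H v.
have -> : v = (fun n => h (g (v n))) by apply: functional_extensionality => n; rewrite hg.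
by rewrite !(hom_teval h0 hs) H.
Qed.

Lemma iso_holds (A B : cBCK) e : iso A B -> holds A e -> holds B e.
Proof. by case=> f [g [gf [fg [f0 fs]]]]; apply: (holds_hom f0 fs fg). Qed.

Lemma iso_sym (A B : cBCK) : iso A B -> iso B A.
Proof.
case=> f [g [gf [fg [f0 fs]]]]; exists g, f; split=> //; split=> //; split.
  by rewrite -f0 gf.
by move=> x y; rewrite -{1}(fg x) -{1}(fg y) -fs gf.
Qed.

Lemma quot_holds (A : cBCK) (th : A -> A -> Prop) (Hc : congruence th) e :
  holds A e -> holds (quot Hc) e.
Proof.
apply: (@holds_hom A (quot Hc) (qcl th) (@qrep A th)) => //.
- by move=> x y /=; rewrite (qsubE Hc).
- exact: qclK.
Qed.

Definition RX (A : Type) (X : (A * A) -> Prop) (x y : A) := x = y \/ X (x, y).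

Lemma si_quotient (A : cBCK) (a b : A) : a <> b ->
  exists (th : A -> A -> Prop) (Hc : congruence th),
    ~ th a b /\ subdirectly_irreducible (quot Hc).
Proof.
move=> ab.
pose P (X : (A * A) -> Prop) := congruence (RX X) /\ ~ X (a, b).
have cong0 : congruence (RX (fun _ : A * A => False)).
  split; first by left.
  split; first by move=> x y [->|[]]; left.
  split; first by move=> x y z [->|[]] [->|[]]; left.
  by move=> x x' y y' [->|[]] [->|[]]; left.
have RXmono : forall (X Y : (A * A) -> Prop) x y,
    (forall p, X p -> Y p) -> RX X x y -> RX Y x y.
  by move=> X Y x y XY [->|H]; [left | right; apply: XY].
have [M [[HcM nMab] Mmax]] : exists M, P M /\
    forall B, classical_sets.proper M B -> ~ P B.
  apply: (@classical_sets.Zorn_bigcup (A * A)%type P) => F FP Ftot.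
  pose U := classical_sets.bigcup F id.
  have two : forall x1 y1 x2 y2, RX U x1 y1 -> RX U x2 y2 ->
      exists X : (A * A) -> Prop, congruence (RX X) /\ RX X x1 y1 /\ RX X x2 y2 /\
        (forall p, X p -> U p).
    move=> x1 y1 x2 y2 [->|[X1 FX1 H1]] [->|[X2 FX2 H2]].
    - by exists (fun _ => False); split=> //; split; [left|split; [left|]].
    - exists X2; split; first exact: (FP _ FX2).1.
      by split; [left|split; [right|move=> p Xp; exists X2]].
    - exists X1; split; first exact: (FP _ FX1).1.
      by split; [right|split; [left|move=> p Xp; exists X1]].
    - case: (Ftot _ _ FX1 FX2) => S.
      + exists X2; split; first exact: (FP _ FX2).1.
        by split; [right; apply: S|split; [right|move=> p Xp; exists X2]].
      + exists X1; split; first exact: (FP _ FX1).1.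
        by split; [right|split; [right; apply: S|move=> p Xp; exists X1]].
  split; last by case=> X FX Xab; apply: (FP X FX).2.
  split; first by left.
  split.
    move=> x y H; case: (two _ _ _ _ H H) => X [[_ [sym _]] [Hxy [_ XU]]].
    exact: (RXmono _ _ _ _ XU (sym _ _ Hxy)).
  split.
    move=> x y z H1 H2; case: (two _ _ _ _ H1 H2) => X [[_ [_ [tr _]]] [Hxy [Hyz XU]]].
    exact: (RXmono _ _ _ _ XU (tr _ _ _ Hxy Hyz)).
  move=> x x' y y' H1 H2; case: (two _ _ _ _ H1 H2) => X [[_ [_ [_ co]]] [Hx [Hy XU]]].
  exact: (RXmono _ _ _ _ XU (co _ _ _ _ Hx Hy)).
have nth : ~ RX M a b by case.
exists (RX M), HcM; split=> //.
exists (qcl (RX M) a), (qcl (RX M) b); split.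
  by move/(qcl_eq HcM).
move=> R [Rrefl [Rsym [Rtr Rco]]] [x [y [Rxy xy]]].
apply: NNPP => nR.
pose Y := fun p : A * A => R (qcl (RX M) p.1) (qcl (RX M) p.2).
have RXY : forall u w, RX Y u w -> R (qcl (RX M) u) (qcl (RX M) w).
  by move=> u w [->|H] //; apply: Rrefl.
apply: (Mmax Y).
  split.
    move=> p Mp; rewrite /Y; have -> : qcl (RX M) p.1 = qcl (RX M) p.2.
      by apply/(qcl_eq HcM); right; case: p Mp.
    exact: Rrefl.
  move=> YM; case: (qsurj x) => x0 ex; case: (qsurj y) => y0 ey.
  apply: xy; rewrite ex ey; apply/(qcl_eq HcM); right; apply: YM.
  by rewrite /Y /= -ex -ey.
split; last exact: nR.
split; first by left.
split; first by move=> u w /RXY H; right; apply: Rsym.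
split; first by move=> u w z /RXY H1 /RXY H2; right; apply: Rtr H2.
move=> u u' w w' /RXY H1 /RXY H2; right; rewrite /Y /=.
have := Rco _ _ _ _ H1 H2; rewrite /= !(qsubE HcM) //.
Qed.

Theorem mainTheorem11 (V W : cls) :
  is_variety V -> finitely_generated V -> n_generated V 1 -> variety_cover V W ->
  exists n, n <= 2 /\ n_generated W n.
Proof.
move=> [EV HEV] _ [[K [Ksi [Kni Kgen]]] _] [[EW HEW] [subVW [notWV cover]]].
have [A [WA nVA]] : exists A, W A /\ ~ V A.
  apply: NNPP => H; apply: notWV => A WA; apply: NNPP => nV; apply: H; by exists A.
have [e [EVe nAe]] : exists e, EV e /\ ~ holds A e.
  apply: NNPP => H; apply: nVA; apply/HEV => e EVe; apply: NNPP => nh; apply: H; by exists e.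
have [v nv] : exists v : nat -> A, teval v e.1 <> teval v e.2.
  apply: NNPP => H; apply: nAe => v; apply: NNPP => nh; apply: H; by exists v.
have [th [Hc [nth siB]]] := si_quotient nv.
pose B := quot Hc.
have WB : W B.
  apply/HEW => f Ef; apply: quot_holds; exact: (proj1 (HEW A) WA f Ef).
have nBe : ~ holds B e.
  move=> H; apply: nth; apply/(qcl_eq Hc).
  have h0 : qcl th (bzero A) = bzero B by [].
  have hs : forall x y, qcl th (bsub x y) = bsub (qcl th x : B) (qcl th y).
    by move=> x y /=; rewrite (qsubE Hc).
  by rewrite -!(@hom_teval A B (qcl th) h0 hs) H.
have nVB : ~ V B by move=> VB; apply: nBe; exact: (proj1 (HEV B) VB e EVe).
have VK : V (K ord0) := (Ksi ord0).1.
have K0e : holds (K ord0) e := proj1 (HEV _) VK e EVe.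
pose K2 (i : 'I_2) : cBCK := if nat_of_ord i is 0 then K ord0 else B.
have i1 : (1 < 2)%N by [].
pose U := fun A0 : cBCK => forall e, (forall i, holds (K2 i) e) -> holds A0 e.
have UW : subcls U W.
  move=> A0 UA0; apply/HEW => f Ef; apply: UA0 => -[[|[|m]] Hm] //=.
  - exact: (proj1 (HEW _) (subVW _ VK) f Ef).
  - exact: (proj1 (HEW _) WB f Ef).
have WU : subcls W U.
  case: (cover U).
  - by exists (fun e => forall i, holds (K2 i) e).
  - move=> A0 VA0 f Hf; apply: (proj1 (Kgen A0) VA0) => i.
    by rewrite (ord1 i); exact: (Hf ord0).
  - exact: UW.
  - move=> UV; exfalso; apply: nVB; apply: UV => f Hf; exact: (Hf (Ordinal i1)).
  - by [].
have fam : si_generating_family W K2.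
  split.
    move=> [[|[|m]] Hm] //=; split => //; [exact: subVW | exact: (Ksi ord0).2].
  split.
    move=> [[|[|m]] Hi] [[|[|n]] Hj] //= ij.
    - by exfalso; apply: ij; apply: val_inj.
    - by move=> /iso_holds /(_ K0e).
    - by move=> /iso_sym /iso_holds /(_ K0e).
    - by exfalso; apply: ij; apply: val_inj.
  by move=> A0; split; [exact: WU | exact: UW].
case: (classic (exists K : 'I_0 -> cBCK, si_generating_family W K)) => [[K0' H0]|n0].
  by exists 0; split => //; split; [exists K0' | move=> m K'].
case: (classic (exists K : 'I_1 -> cBCK, si_generating_family W K)) => [[K1 H1]|n1].
  exists 1; split => //; split; first by exists K1.
  by move=> [|m] K' // _ H; apply: n0; exists K'.
exists 2; split => //; split; first by exists K2.
by move=> [|[|m]] K' // _ H; [apply: n0 | apply: n1]; exists K'.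
Qed.
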